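(* Let $A$ be a graded Frobenius algebra of Gorenstein parameter $-\ell$. For $0\le i,j\le\ell$, the map $A_{j-i}\to\mathrm{Hom}_{A^o}(A_{\ge i}(i),A_{\ge j}(j))$, $a\mapsto(\,\cdot\,a)$ (right multiplication by $a$), is an isomorphism.
   Context: Graded algebras are $\mathbb{N}$-graded algebras over an algebraically closed field $k$; $A_m=0$ for $m<0$. $M(n)_m=M_{n+m}$, $A_{\ge i}=\bigoplus_{m\ge i}A_m$, $D(M)=\bigoplus_m\mathrm{Hom}_k(M_{-m},k)$. $A$ is graded Frobenius of Gorenstein parameter $-\ell$ if it is locally finite and $D(A)\cong A(\ell)$ as graded right $A$-modules. $\mathrm{Hom}_{A^o}$ denotes degree-preserving homomorphisms of graded left $A$-modules. *)

(* Defs.v *)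
From HB Require Import structures.
From mathcomp Require Import all_boot all_order all_algebra.
Set Implicit Arguments. Unset Strict Implicit. Unset Printing Implicit Defensive.
Import Order.TTheory GRing.Theory Num.Theory.
Local Open Scope ring_scope.

(* A graded k-algebra is modelled as a k-algebra A together with a family
   G : int -> {pred A} of homogeneous components, G m = A_m. *)

Definition is_subspace (k : fieldType) (A : algType k) (S : {pred A}) : Prop :=
  [/\ 0 \in S, (forall x y, x \in S -> y \in S -> x + y \in S)
    & (forall (c : k) x, x \in S -> c *: x \in S)].

Definition finite_dim (k : fieldType) (A : algType k) (S : {pred A}) : Prop :=
  exists bs : seq A, all (mem S) bs /\
    forall x, x \in S -> exists cs : seq k,
      x = \sum_(i < size bs) cs`_i *: bs`_i.

Definition graded_algebra (k : fieldType) (A : algType k) (G : int -> {pred A}) : Prop :=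
  [/\ forall m, is_subspace (G m),
      forall m, m < 0 -> forall x, x \in G m -> x = 0,
      forall x : A, exists s : seq int, exists xs : int -> A,
        (forall m, xs m \in G m) /\ x = \sum_(m <- s) xs m,
      forall (s : seq int) (xs : int -> A), uniq s -> (forall m, xs m \in G m) ->
        \sum_(m <- s) xs m = 0 -> forall m, m \in s -> xs m = 0 &
      (1 \in G 0 /\
      forall m n x y, x \in G m -> y \in G n -> x * y \in G (m + n))].

Definition locally_finite (k : fieldType) (A : algType k) (G : int -> {pred A}) : Prop :=
  forall m, finite_dim (G m).

Definition A_ge (k : fieldType) (A : algType k) (G : int -> {pred A}) (i : int) (x : A) : Prop :=
  exists s : seq int, exists xs : int -> A,
    all (fun m => i <= m) s /\ (forall m, xs m \in G m) /\ x = \sum_(m <- s) xs m.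

(* k-linear functionals on the subspace S (elements of Hom_k(S, k)),
   represented by functions A -> k, considered only on S. *)
Definition lin_functional_on (k : fieldType) (A : algType k) (S : {pred A}) (g : A -> k) : Prop :=
  (forall y1 y2, y1 \in S -> y2 \in S -> g (y1 + y2) = g y1 + g y2) /\
  (forall (c : k) y, y \in S -> g (c *: y) = c * g y).

(* Graded Frobenius of Gorenstein parameter -l: locally finite and
   D(A) ~= A(l) as graded right A-modules.  Here phi m x is the image of
   x \in A(l)_m = A_{l+m} in D(A)_m = Hom_k(A_{-m}, k); the right A-action
   on D(A) is (f . a)(y) = f (a y). *)
Definition graded_frobenius (k : fieldType) (A : algType k) (G : int -> {pred A}) (l : int) : Prop :=
  graded_algebra G /\ locally_finite G /\
  exists phi : int -> A -> A -> k,
    [/\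
        forall m x, x \in G (l + m) -> lin_functional_on (G (- m)) (phi m x),
        forall m x1 x2 y, x1 \in G (l + m) -> x2 \in G (l + m) -> y \in G (- m) ->
          phi m (x1 + x2) y = phi m x1 y + phi m x2 y,
        forall m (c : k) x y, x \in G (l + m) -> y \in G (- m) ->
          phi m (c *: x) y = c * phi m x y,
        (forall m x, x \in G (l + m) -> (forall y, y \in G (- m) -> phi m x y = 0) -> x = 0) /\
        (forall m (g : A -> k), lin_functional_on (G (- m)) g ->
          exists2 x, x \in G (l + m) & forall y, y \in G (- m) -> phi m x y = g y)
      &
        forall m n x a y, x \in G (l + m) -> a \in G n -> y \in G (- (m + n)) ->
          phi (m + n) (x * a) y = phi m x (a * y)].

(* Degree-preserving homomorphisms of graded left A-modules
   A_{>= i}(i) -> A_{>= j}(j), represented by functions A -> A considered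
   only on A_{>= i}: k-linear, left A-linear, and sending
   A_{>=i}(i)_m = A_{i+m} into A_{>=j}(j)_m = A_{j+m}. *)
Definition graded_hom_shift (k : fieldType) (A : algType k) (G : int -> {pred A})
    (i j : int) (f : A -> A) : Prop :=
  [/\ forall x y, A_ge G i x -> A_ge G i y -> f (x + y) = f x + f y,
      forall (c : k) x, A_ge G i x -> f (c *: x) = c *: f x,
      forall (b : A) x, A_ge G i x -> f (b * x) = b * f x
    & forall m x, 0 <= m -> x \in G (i + m) -> f x \in G (j + m)].

(* Main.v *)
Require Import Defs.
From HB Require Import structures.
From mathcomp Require Import all_boot all_order all_algebra.
From mathcomp Require Import zify ring.
Import Order.TTheory GRing.Theory Num.Theory.
Set Implicit Arguments. Unset Strict Implicit. Unset Printing Implicit Defensive.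
Local Open Scope ring_scope.

Lemma lin0 (k : fieldType) (A : algType k) (S : {pred A}) (h : A -> k) :
  is_subspace S -> lin_functional_on S h -> h 0 = 0.
Proof. by move=> [S0 _ _] [_ hZ]; rewrite -(scale0r (0 : A)) hZ // mul0r. Qed.

Lemma lin_sum (k : fieldType) (A : algType k) (S : {pred A}) (h : A -> k)
  (I : Type) (s : seq I) (c : I -> k) (z : I -> A) :
  is_subspace S -> lin_functional_on S h -> (forall r, z r \in S) ->
  (\sum_(r <- s) c r *: z r \in S) /\
  h (\sum_(r <- s) c r *: z r) = \sum_(r <- s) c r * h (z r).
Proof.
move=> HS Hh Hz; have [S0 SD SZ] := HS; have [hD hZ] := Hh.
elim: s => [|x s [IH1 IH2]]; first by rewrite !big_nil; split => //; exact: lin0 HS Hh.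
rewrite !big_cons; split; first by apply: SD => //; apply: SZ.
by rewrite hD ?hZ ?IH2 //; apply: SZ.
Qed.

Lemma sub_sum (k : fieldType) (A : algType k) (S : {pred A})
  (I : Type) (s : seq I) (c : I -> k) (z : I -> A) :
  is_subspace S -> (forall r, z r \in S) -> \sum_(r <- s) c r *: z r \in S.
Proof.
move=> [S0 SD SZ] Hz; elim: s => [|x s IH]; first by rewrite big_nil.
by rewrite big_cons; apply: SD => //; apply: SZ.
Qed.

Lemma agree (k : fieldType) (A : algType k) (S : {pred A}) (h1 h2 : A -> k) (vs : seq A) :
  is_subspace S -> lin_functional_on S h1 -> lin_functional_on S h2 ->
  all (mem S) vs ->
  (forall x, x \in S -> exists cs : seq k, x = \sum_(i < size vs) cs`_i *: vs`_i) ->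
  (forall s : 'I_(size vs), h1 vs`_s = h2 vs`_s) ->
  forall v, v \in S -> h1 v = h2 v.
Proof.
move=> HS H1 H2 Hvs Hsp Hag v Hv; have [cs ->] := Hsp v Hv.
have Hz : forall r : 'I_(size vs), vs`_r \in S.
  by move=> r; apply: (allP Hvs); apply: mem_nth.
have [_ ->] := lin_sum (index_enum 'I_(size vs)) (fun r : 'I_(size vs) => cs`_r) HS H1 Hz.
have [_ ->] := lin_sum (index_enum 'I_(size vs)) (fun r : 'I_(size vs) => cs`_r) HS H2 Hz.
by apply: eq_bigr => r _; rewrite Hag.
Qed.

Definition frob_ctx (k : fieldType) (A : algType k) (G : int -> {pred A}) (l : int)
    (eps : A -> k) : Prop :=
  (forall m, is_subspace (G m)) /\
  [/\ forall m n x y, x \in G m -> y \in G n -> x * y \in G (m + n),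
      lin_functional_on (G l) eps,
      forall d x, x \in G d -> (forall y, y \in G (l - d) -> eps (x * y) = 0) -> x = 0,
      forall d (g : A -> k), lin_functional_on (G d) g ->
        exists2 x, x \in G (l - d) & forall y, y \in G d -> eps (x * y) = g y
    & forall m, finite_dim (G m)].

Lemma frob_ctx_of (k : fieldType) (A : algType k) (G : int -> {pred A}) (l : int) :
  graded_frobenius G l -> exists eps, frob_ctx G l eps.
Proof.
move=> [[Hsub _ _ _ [G1 Hmul]] [Hfd [phi [Hlin Hadd Hsc [Hinj Hsurj] Hcomp]]]].
exists (fun z => phi 0 z 1); split => //.
have key : forall m x y, x \in G (l + m) -> y \in G (- m) -> phi m x y = phi 0 (x * y) 1.
  move=> m x y Hx Hy; have := Hcomp m (- m) x y 1 Hx Hy.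
  by rewrite subrr oppr0 mulr1 => /(_ G1) <-.
split => //.
- split=> [y1 y2 H1 H2|c y H].
  + by apply: Hadd; rewrite ?addr0 ?oppr0.
  + by apply: Hsc; rewrite ?addr0 ?oppr0.
- move=> d x Hx H; apply: (Hinj (d - l)); first by have -> : l + (d - l) = d by ring.
  move=> y Hy; rewrite key //; last by have -> : l + (d - l) = d by ring.
  by apply: H; move: Hy; have -> : - (d - l) = l - d by ring.
- move=> d g Hg; have [|x Hx Hxg] := Hsurj (- d) g; first (rewrite opprK; exact: Hg).
  exists x => // y Hy; rewrite -Hxg; last by rewrite opprK.
  by rewrite (key (- d)) // opprK.
Qed.

Lemma memGl (k : fieldType) (A : algType k) (G : int -> {pred A}) (l : int) eps d x y :
  frob_ctx G l eps -> x \in G d -> y \in G (l - d) -> x * y \in G l.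
Proof.
move=> [_ [Hmul _ _ _ _]] Hx Hy; have := Hmul _ _ _ _ Hx Hy.
by have -> : d + (l - d) = l by ring.
Qed.

Lemma memGl' (k : fieldType) (A : algType k) (G : int -> {pred A}) (l : int) eps d x y :
  frob_ctx G l eps -> x \in G (l - d) -> y \in G d -> x * y \in G l.
Proof.
move=> [_ [Hmul _ _ _ _]] Hx Hy; have := Hmul _ _ _ _ Hx Hy.
by have -> : l - d + d = l by ring.
Qed.

Lemma linL (k : fieldType) (A : algType k) (G : int -> {pred A}) (l : int) eps d u :
  frob_ctx G l eps -> u \in G d -> lin_functional_on (G (l - d)) (fun v => eps (u * v)).
Proof.
move=> C Hu; have [_ [_ [eD eZ] _ _ _]] := C.
split=> [y1 y2 H1 H2|c y H]; first by rewrite mulrDr eD //; by [apply: (memGl C Hu) | apply: (memGl C Hu H1) | apply: (memGl C Hu H2)].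
by rewrite -scalerAr eZ //; by [apply: (memGl C Hu) | apply: (memGl C Hu H1) | apply: (memGl C Hu H2)].
Qed.

Lemma linR (k : fieldType) (A : algType k) (G : int -> {pred A}) (l : int) eps d u :
  frob_ctx G l eps -> u \in G d -> lin_functional_on (G (l - d)) (fun v => eps (v * u)).
Proof.
move=> C Hu; have [_ [_ [eD eZ] _ _ _]] := C.
split=> [y1 y2 H1 H2|c y H]; first by rewrite mulrDl eD //; by [apply: (memGl' C H1 Hu) | apply: (memGl' C H2 Hu) | apply: (memGl' C H Hu)].
by rewrite -scalerAl eZ //; by [apply: (memGl' C H1 Hu) | apply: (memGl' C H2 Hu) | apply: (memGl' C H Hu)].
Qed.

Lemma linR' (k : fieldType) (A : algType k) (G : int -> {pred A}) (l : int) eps d u :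
  frob_ctx G l eps -> u \in G (l - d) -> lin_functional_on (G d) (fun v => eps (v * u)).
Proof.
move=> C Hu; have [_ [_ [eD eZ] _ _ _]] := C.
split=> [y1 y2 H1 H2|c y H]; first by rewrite mulrDl eD //; by [apply: (memGl C H1 Hu) | apply: (memGl C H2 Hu) | apply: (memGl C H Hu)].
by rewrite -scalerAl eZ //; by [apply: (memGl C H1 Hu) | apply: (memGl C H2 Hu) | apply: (memGl C H Hu)].
Qed.

Lemma inj2 (k : fieldType) (A : algType k) (G : int -> {pred A}) (l : int) eps :
  frob_ctx G l eps -> forall d w, w \in G d ->
  (forall z, z \in G (l - d) -> eps (z * w) = 0) -> w = 0.
Proof.
move=> C d w Hw Hz; have [_ [_ _ Hinj Hsurj _]] := C.
apply: (Hinj d w Hw) => y Hy.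
have [x Hx Hxg] := Hsurj d _ (linR' C Hy).
by rewrite -(Hxg w Hw) Hz.
Qed.

Lemma surj2 (k : fieldType) (A : algType k) (G : int -> {pred A}) (l : int) eps :
  frob_ctx G l eps -> forall d (g : A -> k), lin_functional_on (G (l - d)) g ->
  exists2 a, a \in G d & forall v, v \in G (l - d) -> eps (v * a) = g v.
Proof.
move=> C d g Hg; have [Hsub [Hmul He Hinj Hsurj Hfd]] := C.
have [us [Hus Uspan]] := Hfd d.
have [vs [Hvs Vspan]] := Hfd (l - d).
have usG : forall r : nat, us`_r \in G d.
  move=> r; case: (ltnP r (size us)) => Hr; first by apply: (allP Hus); apply: mem_nth.
  by rewrite nth_default //; have [] := Hsub d.
have vsG : forall r : nat, vs`_r \in G (l - d).
  move=> r; case: (ltnP r (size vs)) => Hr; first by apply: (allP Hvs); apply: mem_nth.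
  by rewrite nth_default //; have [] := Hsub (l - d).
pose p := size us; pose q := size vs.
pose Bm : 'M[k]_(p, q) := \matrix_(r, s) eps (us`_r * vs`_s).
pose Gm : 'M[k]_(p, q) := \matrix_(r, s) eps (vs`_s * us`_r).
pose uc (c : 'rV[k]_p) := \sum_(r < p) c 0 r *: us`_r.
have ucG : forall c, uc c \in G d.
  by move=> c; apply: sub_sum (Hsub d) _ => r.
have F1 : forall c s, (c *m Bm) 0 s = eps (uc c * vs`_s).
  move=> c s; rewrite mxE /uc mulr_suml.
  rewrite (eq_bigr (fun r : 'I_p => c 0 r *: (us`_r * vs`_s))); last by move=> r _; rewrite scalerAl.
  have Hz : forall r : 'I_p, us`_r * vs`_s \in G l by move=> r; apply: memGl C (usG r) (vsG s).
  have [_ ->] := lin_sum (index_enum 'I_p) (fun r : 'I_p => c 0 r) (Hsub l) He Hz.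
  by apply: eq_bigr => r _; rewrite mxE.
have F2 : forall c s, (c *m Gm) 0 s = eps (vs`_s * uc c).
  move=> c s; rewrite mxE /uc mulr_sumr.
  rewrite (eq_bigr (fun r : 'I_p => c 0 r *: (vs`_s * us`_r))); last by move=> r _; rewrite scalerAr.
  have Hz : forall r : 'I_p, vs`_s * us`_r \in G l by move=> r; apply: memGl' C (vsG s) (usG r).
  have [_ ->] := lin_sum (index_enum 'I_p) (fun r : 'I_p => c 0 r) (Hsub l) He Hz.
  by apply: eq_bigr => r _; rewrite mxE.
have e0 : eps 0 = 0 by apply: lin0 (Hsub l) He.
have KB : forall c, (c *m Bm == 0) = (uc c == 0).
  move=> c; apply/eqP/eqP => [H|H].
  - apply: (Hinj d _ (ucG c)).
    have := agree (Hsub (l - d)) (linL C (ucG c)) (linL C (usG 0%N)) Hvs Vspan.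
    move=> Hag.
    have lin0f : lin_functional_on (G (l - d)) (fun _ => (0 : k)).
      by split=> *; rewrite ?addr0 ?mulr0.
    move=> y Hy; apply: (agree (Hsub (l - d)) (linL C (ucG c)) lin0f Hvs Vspan) => // s.
    by rewrite -F1 H mxE.
  - by apply/rowP => s; rewrite F1 H mul0r e0 mxE.
have KG : forall c, (c *m Gm == 0) = (uc c == 0).
  move=> c; apply/eqP/eqP => [H|H].
  - apply: (inj2 C (ucG c)).
    have lin0f : lin_functional_on (G (l - d)) (fun _ => (0 : k)).
      by split=> *; rewrite ?addr0 ?mulr0.
    move=> y Hy; apply: (agree (Hsub (l - d)) (linR C (ucG c)) lin0f Hvs Vspan) => // s.
    by rewrite -F2 H mxE.
  - by apply/rowP => s; rewrite F2 H mulr0 e0 mxE.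
have ld : l - (l - d) = d by ring.
have Rep : forall h : A -> k, lin_functional_on (G (l - d)) h ->
    exists c : 'rV[k]_p, forall s : 'I_q, (c *m Bm) 0 s = h (vs`_s).
  move=> h Hh; have [x Hx Hxh] := Hsurj _ h Hh.
  rewrite ld in Hx; have [cs Ecs] := Uspan x Hx.
  exists (\row_i cs`_i) => s; rewrite F1 -Hxh //.
  congr (eps (_ * _)); rewrite Ecs /uc; apply: eq_bigr => r _; by rewrite mxE.
have Sub : (Gm <= Bm)%MS.
  apply/row_subP => r; apply/submxP.
  have [c Hc] := Rep _ (linR C (usG r)).
  exists c; apply/rowP => s; by rewrite Hc !mxE.
have Rk : (\rank Bm <= \rank Gm)%N.
  have : (kermx Gm <= kermx Bm)%MS.
    rewrite sub_kermx; apply/eqP/row_matrixP => r.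
    rewrite row_mul row0; apply/eqP; rewrite KB -KG -row_mul mulmx_ker row0 //.
  move/mxrankS; rewrite !mxrank_ker.
  have := rank_leq_row Bm; have := rank_leq_row Gm; lia.
have Sub2 : (Bm <= Gm)%MS by rewrite -(geq_leqif (mxrank_leqif_sup Sub)).
have [c Hc] := Rep _ Hg.
have : (c *m Bm <= Gm)%MS by apply: submx_trans (submxMl _ _) Sub2.
case/submxP => c' Ec'.
exists (uc c'); first exact: ucG.
apply: (agree (Hsub (l - d)) (linR C (ucG c')) Hg Hvs Vspan) => s.
by rewrite -F2 -Ec' Hc.
Qed.

Lemma A_ge_of (k : fieldType) (A : algType k) (G : int -> {pred A}) (i e : int) x :
  (forall m, is_subspace (G m)) -> i <= e -> x \in G e -> A_ge G i x.
Proof.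
move=> Hsub Hie Hx; exists [:: e], (fun m => if m == e then x else 0); split; [|split].
- by rewrite /= Hie.
- by move=> m; case: eqP => [->|_] //; have [] := Hsub m.
- by rewrite big_seq1 eqxx.
Qed.

Theorem lemma4p14 (k : closedFieldType) (A : algType k) (G : int -> {pred A})
    (l : int) (i j : int) :
  graded_frobenius G l ->
  0 <= i <= l -> 0 <= j <= l ->
  (* the map a |-> ( . a) is well defined: A_{j-i} -> Hom_{A^o}(A_{>=i}(i), A_{>=j}(j)) *)
  (forall a, a \in G (j - i) -> graded_hom_shift G i j (fun x => x * a)) /\
  (* injective *)
  (forall a, a \in G (j - i) -> (forall x, A_ge G i x -> x * a = 0) -> a = 0) /\
  (* surjective *)
  (forall f, graded_hom_shift G i j f ->
     exists2 a, a \in G (j - i) & forall x, A_ge G i x -> f x = x * a).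
Proof.
move=> HF /andP[Hi0 Hil] /andP[Hj0 Hjl].
have [eps C] := frob_ctx_of HF.
have [Hsub [Hmul He Hinj Hsurj Hfd]] := C.
have [eD eZ] := He.
have e0 : eps 0 = 0 by apply: lin0 (Hsub l) He.
split; [|split].
- move=> a Ha; split.
  + by move=> x y _ _; rewrite mulrDl.
  + by move=> c x _; rewrite scalerAl.
  + by move=> b x _; rewrite mulrA.
  + move=> m x _ Hx; have := Hmul _ _ _ _ Hx Ha.
    by have -> : i + m + (j - i) = j + m by ring.
- move=> a Ha H; apply: (inj2 C Ha) => z Hz.
  rewrite H ?e0 //; apply: A_ge_of Hsub _ Hz; lia.
- move=> f [fD fZ fL fdeg].
  have VA : forall v, v \in G (l - (j - i)) -> A_ge G i v.
    by move=> v Hv; apply: A_ge_of Hsub _ Hv; lia.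
  have fV : forall v, v \in G (l - (j - i)) -> f v \in G l.
    move=> v Hv; have : v \in G (i + (l - j)) by have <- : l - (j - i) = i + (l - j) by ring.
    move/(fdeg (l - j)); have -> : j + (l - j) = l by ring.
    by apply; lia.
  have Hg : lin_functional_on (G (l - (j - i))) (fun v => eps (f v)).
    split=> [y1 y2 H1 H2|c y H].
    + rewrite fD ?eD //; by [apply: VA | apply: fV].
    + rewrite fZ ?eZ //; by [apply: VA | apply: fV].
  have [a Ha Hag] := surj2 C Hg.
  exists a => //.
  have hom : forall e x, i <= e -> x \in G e -> f x = x * a.
    move=> e x Hie Hx.
    have Hfx : f x \in G (e + (j - i)).
      have : x \in G (i + (e - i)) by have -> : i + (e - i) = e by ring.
      move/(fdeg (e - i)); have -> : j + (e - i) = e + (j - i) by ring.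
      by apply; lia.
    have Hxa : x * a \in G (e + (j - i)) by apply: Hmul.
    apply/eqP; rewrite -subr_eq0; apply/eqP.
    apply: (inj2 C (d := e + (j - i))).
      have [S0 SD SZ] := Hsub (e + (j - i)).
      by rewrite -scaleN1r; apply: SD => //; apply: SZ.
    move=> z Hz.
    have Hzx : z * x \in G (l - (j - i)).
      have := Hmul _ _ _ _ Hz Hx.
      by have -> : l - (e + (j - i)) + e = l - (j - i) by ring.
    rewrite mulrBr -fL; last by apply: A_ge_of Hsub Hie Hx.
    rewrite mulrA -scaleN1r eD ?eZ ?Hag // ?mulN1r ?subrr //.
    + apply: (memGl' C Hzx Ha).
    + by apply: fV.
    + have [_ _ SZ] := Hsub l; apply: SZ; apply: (memGl' C Hzx Ha).
  move=> x [s [xs [Hs [Hxs ->]]]].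
  elim: s Hs => [|m s IH] /=.
  + move=> _; rewrite big_nil mul0r.
    have HA0 : A_ge G i 0.
      have [S0 _ _] := Hsub i.
      have Hii : i <= i by [].
      exact: (A_ge_of Hsub Hii S0).
    have := fZ 0 0 HA0; rewrite !scale0r => ->; done.
  + move=> /andP[Hm Hs]; rewrite big_cons mulrDl -IH // fD.
    * by rewrite (hom m).
    * by apply: A_ge_of Hsub Hm _.
    * by exists s, xs.
Qed.
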